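(* For even $m\ge 18$, let $G^{\mathrm{same}}_m$ be the graph with vertex set $\{u^*\}\cup A\cup\{z,x,y\}\cup L$, where $A=\{a_1,a_2,a_3,a_4\}$ induces a $K_4$, $|L|=m-14$, $u^*$ is adjacent to every vertex of $A\cup\{z\}\cup L$, $z$ is adjacent to $x$ and $y$, $x$ is adjacent to $y$, and there are no other edges (so $G^{\mathrm{same}}_m$ has $m$ edges). Its spectral radius equals the largest root of \[ f_{\mathrm{same}}(x)=x^5-4x^4+(10-m)x^3+(4m-42)x^2+(19-m)x+84-6m, \] and $\rho(G^{\mathrm{same}}_m)<\rho'(m)$.
   Context: $\rho(G)$ denotes the adjacency spectral radius. For even $m$, $\rho'(m)$ is the largest real root of $p_m(x)=x^4-mx^2-(m-2)x+\frac{m}{2}-1$. *)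

(* Defs.v *)
From HB Require Import structures.
From mathcomp Require Import all_boot all_order all_algebra all_field.
Set Implicit Arguments. Unset Strict Implicit. Unset Printing Implicit Defensive.
Import Order.TTheory GRing.Theory Num.Theory.
Local Open Scope ring_scope.

Definition is_spectral_radius (n : nat) (M : 'M[algC]_n) (r : algC) : Prop :=
  (exists2 l : algC, eigenvalue M l & `|l| = r) /\
  (forall l : algC, eigenvalue M l -> `|l| <= r).

Definition adjmx (n : nat) (e : rel 'I_n) : 'M[algC]_n :=
  \matrix_(i < n, j < n) (e i j)%:R.

Definition largest_real_root (p : {poly algC}) (r : algC) : Prop :=
  [/\ r \is Num.real, root p r &
      forall s : algC, s \is Num.real -> root p s -> s <= r].

(* G^same_m on vertex set 'I_(m-6), labelled:
   0 = u*, 1..4 = a_1..a_4 (the K4 A), 5 = z, 6 = x, 7 = y, 8..m-7 = L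
   (so |L| = m - 14 when m >= 14). *)
Definition same_edge0 (i j : nat) : bool :=
  [|| (i == 0%N) && ((1 <= j <= 5)%N || (8 <= j)%N),
      [&& (1 <= i <= 4)%N, (1 <= j <= 4)%N & i != j]
    | [&& (5 <= i <= 7)%N, (5 <= j <= 7)%N & i != j] ].

Definition same_edge (i j : nat) : bool := same_edge0 i j || same_edge0 j i.

Definition G_same (m : nat) : rel 'I_(m - 6) :=
  fun i j => same_edge (nat_of_ord i) (nat_of_ord j).

Arguments G_same m : clear implicits.

Definition f_same (m : nat) : {poly algC} :=
  'X^5 - 4%:P * 'X^4 + (10 - m%:R)%:P * 'X^3 + (4 * m%:R - 42)%:P * 'X^2
  + (19 - m%:R)%:P * 'X + (84 - 6 * m%:R)%:P.

(* p_m(x) = x^4 - m x^2 - (m-2) x + m/2 - 1 ; rho'(m) is its largest real root *)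
Definition p_m (m : nat) : {poly algC} :=
  'X^4 - (m%:R)%:P * 'X^2 - (m%:R - 2)%:P * 'X + (m%:R / 2 - 1)%:P.

(* Main.v *)
Require Import Defs.
From HB Require Import structures.
From mathcomp Require Import all_boot all_order all_algebra all_field.
From mathcomp Require Import ring lra zify.
Import Order.TTheory GRing.Theory Num.Theory.
Local Open Scope ring_scope.

Definition fG (R : fieldType) (m : nat) : {poly R} :=
  'X^5 - 4%:P * 'X^4 + (10 - m%:R)%:P * 'X^3 + (4 * m%:R - 42)%:P * 'X^2
  + (19 - m%:R)%:P * 'X + (84 - 6 * m%:R)%:P.
Definition pG (R : fieldType) (m : nat) : {poly R} :=
  'X^4 - (m%:R)%:P * 'X^2 - (m%:R - 2)%:P * 'X + (m%:R / 2 - 1)%:P.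

Lemma fG_C m : f_same m = fG algC m. Proof. reflexivity. Qed.
Lemma pG_C m : p_m m = pG algC m. Proof. by []. Qed.

Lemma fG_eval (R : fieldType) m x : (fG R m).[x] =
  x^+5 - 4 * x^+4 + (10 - m%:R) * x^+3 + (4 * m%:R - 42) * x^+2
  + (19 - m%:R) * x + (84 - 6 * m%:R).
Proof. by rewrite /fG !(hornerD, hornerN, hornerM, hornerC, hornerX, hornerXn). Qed.
Lemma pG_eval (R : fieldType) m x : (pG R m).[x] =
  x^+4 - m%:R * x^+2 - (m%:R - 2) * x + (m%:R / 2 - 1).
Proof. by rewrite /pG !(hornerD, hornerN, hornerM, hornerC, hornerX, hornerXn). Qed.


Lemma vD (x y : algR) : val (x + y) = val x + val y. Proof. exact: rmorphD. Qed.
Lemma vB (x y : algR) : val (x - y) = val x - val y. Proof. exact: rmorphB. Qed.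
Lemma vM (x y : algR) : val (x * y) = val x * val y. Proof. exact: rmorphM. Qed.
Lemma vX (x : algR) n : val (x ^+ n) = val x ^+ n. Proof. exact: rmorphXn. Qed.
Lemma vN (n : nat) : val (n%:R : algR) = n%:R. Proof. exact: rmorph_nat. Qed.
Lemma vV (x : algR) : val (x^-1) = (val x)^-1. Proof. exact: fmorphV. Qed.




Lemma fG_val m (x : algR) : (fG algC m).[val x] = val ((fG algR m).[x]).
Proof. by rewrite !fG_eval !(vN, vX, vM, vB, vD). Qed.
Lemma pG_val m (x : algR) : (pG algC m).[val x] = val ((pG algR m).[x]).
Proof. by rewrite !pG_eval !(vN, vV, vX, vM, vB, vD). Qed.


Definition fE (R : realFieldType) (M x : R) := x^+5 - 4 * x^+4 + (10 - M) * x^+3 + (4 * M - 42) * x^+2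
  + (19 - M) * x + (84 - 6 * M).
Definition pE (R : realFieldType) (M x : R) := x^+4 - M * x^+2 - (M - 2) * x + (M / 2 - 1).
Definition gE (R : realFieldType) (M x : R) := 10*x^+3 + (M-44)*x^+2 + (28 - 11/2*M)*x + 80 - 4*M.

Lemma fpg (R : realFieldType) M x : (x - 4) * pE R M x = fE R M x - gE R M x.
Proof. by rewrite /pE /fE /gE; field. Qed.

Lemma key (R : realFieldType) M L r : 18 <= M -> 42/10 <= L -> L <= r -> 0 < gE R M L ->
  fE R M r = 0 -> pE R M r < 0.
Proof.
move=> hM hL hLr hg hf.
have hB : 0 < 10*(r^+2+r*L+L^+2) + (M-44)*(r+L) + 28 - 11/2*M.
  have h1 : 0 <= (M-18)*(r+L-11/2) by apply: mulr_ge0; lra.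
  have h2 : 42/10 * r <= r^+2 by rewrite expr2; apply: ler_wpM2r; lra.
  have h3 : 42/10 * L <= L^+2 by rewrite expr2; apply: ler_wpM2r; lra.
  have h4 : 42/10 * r <= r * L by rewrite mulrC; apply: ler_wpM2l; lra.
  nra.
have hgr : gE R M r - gE R M L = (r - L) * (10*(r^+2+r*L+L^+2) + (M-44)*(r+L) + 28 - 11/2*M).
  rewrite /gE; ring.
have : 0 <= (r - L) * (10*(r^+2+r*L+L^+2) + (M-44)*(r+L) + 28 - 11/2*M).
  apply: mulr_ge0; lra.
rewrite -hgr => h5.
have h6 : (r - 4) * pE R M r < 0 by rewrite fpg hf; lra.
have h7 : 0 < r - 4 by lra.
by rewrite pmulr_rlt0 in h6.
Qed.

Lemma fM_pos (R : realFieldType) M : 18 <= M -> 0 < fE R M M.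
Proof.
move=> hM; rewrite /fE.
have h1 : 0 < M^+4 by apply: exprn_gt0; lra.
have h2 : 13 * M^+4 <= M^+5 - 5 * M^+4 by rewrite exprS; nra.
have h3 : 0 < M^+3 by apply: exprn_gt0; lra.
have h4 : 18 * M^+3 <= M^+4 by rewrite (exprS _ 3); nra.
have h5 : 18 * M^+2 <= M^+3 by rewrite (exprS _ 2); nra.
have h6 : 18 * M <= M^+2 by rewrite expr2; nra.
nra.
Qed.

Lemma pbig_pos (R : realFieldType) M y : 18 <= M -> M <= y -> 0 < pE R M y.
Proof.
move=> hM hy; rewrite /pE.
have h0 : 18 <= y by lra.
have h1 : M * y^+2 <= y^+3 by rewrite (exprS _ 2); apply: ler_wpM2r => //; nra.
have h2 : (M - 2) * y <= y^+2 by rewrite expr2; apply: ler_wpM2r; lra.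
have h3 : 18 * y^+3 <= y^+4 by rewrite (exprS _ 3); apply: ler_wpM2r; [apply: exprn_ge0|]; lra.
have h4 : 18 * y^+2 <= y^+3 by rewrite (exprS _ 2); apply: ler_wpM2r; [apply: exprn_ge0|]; lra.
have h5 : 0 <= y^+2 by apply: exprn_ge0; lra.
nra.
Qed.

Lemma big_case (R : realFieldType) M : 44 <= M -> fE R M (62/10) < 0 /\ 0 < gE R M (62/10).
Proof. move=> hM; rewrite /fE /gE; split; lra. Qed.


Definition Lsm (R : realFieldType) (M : R) : R := 426/100 + 3/100*(M-18).

Lemma small_case (R : realFieldType) (k : nat) : (k < 26)%N ->
  fE R (k + 18)%:R (Lsm R (k + 18)%:R) < 0 /\ 0 < gE R (k+18)%:R (Lsm R (k+18)%:R).
Proof.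
rewrite /fE /gE /Lsm.
do 26! (case: k => [_|k]; first by rewrite natrD; split; lra).
by [].
Qed.


Lemma seq_max (T : eqType) (f : T -> algC) (s : seq T) x : x \in s ->
  (forall y, y \in s -> f y \is Num.real) ->
  exists2 r, r \in s & forall y, y \in s -> f y <= f r.
Proof.
elim: s x => [//|a s IH] x _ hs.
have ha : f a \is Num.real := hs a (mem_head _ _).
case: s IH hs => [|b s] IH hs.
  exists a; first by rewrite mem_head.
  by move=> y; rewrite inE => /eqP ->.
have hs' : forall y, y \in b :: s -> f y \is Num.real.
  by move=> y hy; apply: hs; rewrite inE hy orbT.
have [r hr hmax] := IH b (mem_head _ _) hs'.
have hrR : f r \is Num.real := hs' r hr.
case/orP: (real_leVge ha hrR) => h.
  exists r; first by rewrite inE hr orbT.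
  by move=> y; rewrite inE => /orP [/eqP->|/hmax].
exists a; first exact: mem_head.
move=> y; rewrite inE => /orP [/eqP->|/hmax hy]; first exact: lexx.
exact: le_trans hy h.
Qed.

Lemma max_real_root (p : {poly algC}) x : p != 0 -> x \is Num.real -> root p x ->
  exists r, largest_real_root p r /\ x <= r.
Proof.
move=> p0 xR px.
have [rs prs] := closed_field_poly_normal p.
have hroot : forall s, root p s = (s \in rs).
  by move=> s; rewrite prs rootZ ?lead_coef_eq0 // root_prod_XsubC.
set S := [seq s <- rs | s \is Num.real].
have xS : x \in S by rewrite mem_filter xR -hroot.
have SR : forall y, y \in S -> id y \is Num.real.
  by move=> y; rewrite mem_filter => /andP[].
have [r rS rmax] := @seq_max _ id _ _ xS SR.
exists r; split; last exact: rmax.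
move: rS; rewrite mem_filter => /andP[rR rrs].
split => //; first by rewrite hroot.
by move=> s sR ps; apply: rmax; rewrite mem_filter sR -hroot.
Qed.

Lemma perron n (A : 'M[algC]_n) (v : 'rV[algC]_n) r :
  (forall i j, 0 <= A i j) -> (forall i, 0 < v 0 i) -> v *m A = r *: v ->
  forall l, eigenvalue A l -> `|l| <= r.
Proof.
move=> hA hv hvA l /eigenvalueP [w hw w0].
have [j0 hj0] : exists j, w 0 j != 0.
  case: (pickP (fun j => w 0 j != 0)) => [j hj|h]; first by exists j.
  case/negP: w0; apply/eqP/matrixP=> i j; rewrite ord1 !mxE.
  by move/negbFE/eqP: (h j).
pose q j := `|w 0 j| / v 0 j.
have qR : forall j, j \in enum 'I_n -> q j \is Num.real.
  by move=> j _; apply: ger0_real; apply: divr_ge0 => //; apply: ltW.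
have [j _ jmax] := @seq_max _ q _ _ (mem_enum predT j0) qR.
have qj0 : 0 < q j0 by apply: divr_gt0; rewrite ?normr_gt0.
have qj : 0 < q j by apply: lt_le_trans qj0 (jmax _ (mem_enum predT j0)).
have wj : 0 < `|w 0 j|.
  rewrite normr_gt0; apply/eqP => wj0; move: qj; by rewrite /q wj0 normr0 mul0r ltxx.
have hi : forall i, `|w 0 i| <= q j * v 0 i.
  by move=> i; rewrite -ler_pdivrMr //; apply: jmax; rewrite mem_enum.
have e1 : l * w 0 j = \sum_i w 0 i * A i j.
  by have := congr1 (fun M : 'M[algC]_(1,n) => M 0 j) hw; rewrite !mxE => <-.
have e2 : \sum_i v 0 i * A i j = r * v 0 j.
  by have := congr1 (fun M : 'M[algC]_(1,n) => M 0 j) hvA; rewrite !mxE.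
have : `|l| * `|w 0 j| <= r * `|w 0 j|.
  rewrite -normrM e1.
  apply: le_trans (ler_norm_sum _ _ _) _.
  apply: (@le_trans _ _ (\sum_i q j * v 0 i * A i j)).
    apply: ler_sum => i _; rewrite normrM (ger0_norm (hA i j)).
    by apply: ler_wpM2r.
  under eq_bigr do rewrite -mulrA.
  rewrite -mulr_sumr e2 mulrCA /q divfK //.
  by rewrite gt_eqF // hv.
by rewrite ler_pM2r.
Qed.

Lemma se_hi i k : (8 <= i)%N -> same_edge i k = (k == 0)%N.
Proof. rewrite /same_edge /same_edge0 => hi. apply/idP/idP; lia. Qed.
Lemma se_hi2 i k : (8 <= k)%N -> same_edge i k = (i == 0)%N.
Proof. rewrite /same_edge /same_edge0 => hi. apply/idP/idP; lia. Qed.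

Definition vf (r : algC) (i : nat) : algC :=
  if i == 0%N then r * ((r-3) * (r^+2 - r - 2)) else
  if (i <= 4)%N then r * (r^+2 - r - 2) else
  if i == 5%N then r*(r-1)*(r-3) else
  if (i <= 7)%N then r*(r-3) else (r-3)*(r^+2 - r - 2).

Lemma vf_hi r i : (8 <= i)%N -> vf r i = (r-3)*(r^+2 - r - 2).
Proof.
move=> hi; rewrite /vf.
have -> : (i == 0)%N = false by lia.
have -> : (i <= 4)%N = false by lia.
have -> : (i == 5)%N = false by lia.
by have -> : (i <= 7)%N = false by lia.
Qed.

Lemma eigvec m r : (18 <= m)%N -> (fG algC m).[r] = 0 ->
  (\row_(i < m - 6) vf r i) *m adjmx (G_same m) = r *: \row_(i < m - 6) vf r i.
Proof.
move=> hm hf; apply/rowP => j; rewrite !mxE.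
under eq_bigr do rewrite !mxE.
rewrite /G_same.
rewrite -(big_mkord xpredT (fun i => vf r i * (same_edge i j)%:R)).
rewrite (big_cat_nat _ (n:=8)) //=; last by lia.
rewrite !big_nat_recl // big_geq // addr0.
have jlt := ltn_ord j.
move: (nat_of_ord j) jlt => k klt.
have [k8|k8] := ltnP k 8.
  have e : forall i, (8 <= i)%N -> same_edge i k = (k == 0)%N by move=> i; exact: se_hi.
  rewrite (eq_big_nat _ _ (F2 := fun i => if k == 0%N then (r-3)*(r^+2-r-2) else 0)); last first.
    by move=> i /andP[hi _]; rewrite e // vf_hi //; case: (k == 0%N); rewrite /= ?mulr1 ?mulr0.
  rewrite sumr_const_nat.
  case: k klt k8 e => [|[|[|[|[|[|[|[|k]]]]]]]] klt k8 e //; rewrite /vf /=; 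
    rewrite ?mulr1 ?mulr0 ?addr0 ?add0r ?mul0rn ?addr0.
  all: try ring.
  have -> : (m - 6 - 8 = m - 14)%N by lia.
  rewrite -[_ *+ (m - 14)]mulr_natr natrB; last by lia.
  by rewrite -[RHS]subr0 -hf fG_eval; ring.
have e : forall i, (8 <= i)%N -> same_edge i k = false.
  by move=> i hi; rewrite se_hi2 //; lia.
rewrite big1_seq; last first.
  by move=> i /andP[_]; rewrite mem_index_iota => /andP[hi _]; rewrite e // mulr0.
rewrite !se_hi2 //= (@vf_hi r k k8) /vf /= !mulr0 !addr0 mulr1.
ring.
Qed.

Lemma ltv (x y : algR) : (x < y) = (val x < val y). Proof. by []. Qed.
Lemma lev (x y : algR) : (x <= y) = (val x <= val y). Proof. by []. Qed.
Lemma v0 : val (0 : algR) = 0. Proof. by []. Qed.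

Lemma fGE (R : realFieldType) m x : (fG R m).[x] = fE R m%:R x.
Proof. by rewrite fG_eval. Qed.
Lemma pGE (R : realFieldType) m x : (pG R m).[x] = pE R m%:R x.
Proof. by rewrite pG_eval. Qed.

Lemma val_eq0 (x : algR) : (val x == 0) = (x == 0).
Proof. by rewrite -v0 (inj_eq val_inj). Qed.

Theorem proposition6p2 (m : nat) (hm_even : ~~ odd m) (hm : (18 <= m)%N) :
  exists rho : algC,
    [/\ is_spectral_radius (adjmx (G_same m)) rho,
        largest_real_root (f_same m) rho &
        exists2 rho' : algC, largest_real_root (p_m m) rho' & rho < rho'].
Proof.
pose M : algR := m%:R.
have hM : 18 <= M by rewrite /M ler_nat.
have [L [hL1 hL2 hfL hgL]] : exists L : algR,
    [/\ 42/10 <= L, L <= M, fE algR M L < 0 & 0 < gE algR M L].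
  case: (leqP 44 m) => h44.
    have hM44 : 44 <= M by rewrite /M ler_nat.
    have [h1 h2] := @big_case algR M hM44.
    by exists (62/10); split => //; lra.
  have eM : M = ((m - 18) + 18)%N%:R by rewrite /M; congr (_%:R); lia.
  have [h1 h2] := @small_case algR (m - 18) ltac:(lia).
  rewrite -eM in h1 h2; exists (Lsm algR M); split => //; rewrite /Lsm; lra.
have [r0 /andP[hr0a hr0b] r0root] : exists2 x, L <= x <= M & root (fG algR m) x.
  apply: poly_ivt => //; rewrite !fGE -/M; apply/andP; split.
    exact: ltW.
  exact: ltW (@fM_pos algR M hM).
have fnz : f_same m != 0.
  apply/eqP => h0; have := congr1 (fun p => p.[val L]) h0.
  rewrite /= horner0 fG_C fG_val => /eqP; rewrite val_eq0 fGE -/M => /eqP.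
  by move=> h; move: hfL; rewrite h ltxx.
have r0C : root (f_same m) (val r0).
  by rewrite rootE fG_C fG_val val_eq0 -rootE.
have [rho [[rhoR rhoroot rhomax] hr0rho]] :=
  @max_real_root _ _ fnz (algRvalP r0) r0C.
pose r : algR := in_algR rhoR.
have rval : val r = rho by [].
have hr0r : r0 <= r by rewrite lev rval.
have hLr : L <= r by apply: le_trans hr0r.
have froot : fE algR M r = 0.
  move: rhoroot; rewrite -rval rootE fG_C fG_val val_eq0 fGE -/M.
  by move/eqP.
have hpr : pE algR M r < 0 by exact: (@key algR M L r hM hL1 hLr hgL froot).
have hpb : 0 < pE algR M (r + M) by apply: (@pbig_pos algR) => //; lra.
have [r1 /andP[hr1a hr1b] r1root] : exists2 x, r <= x <= r + M & root (pG algR m) x.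
  apply: poly_ivt; first lra.
  by rewrite !pGE -/M; apply/andP; split; apply: ltW.
have hrr1 : r < r1.
  rewrite lt_neqAle hr1a andbT; apply/eqP => er.
  by move: r1root; rewrite -er rootE pGE -/M => /eqP h; move: hpr; rewrite h ltxx.
have pnz : p_m m != 0.
  apply/eqP => h0; have : (p_m m).[val r] = 0 by rewrite h0 horner0.
  rewrite pG_C pG_val => /eqP; rewrite val_eq0 pGE -/M => /eqP.
  by move=> h; move: hpr; rewrite h ltxx.
have r1C : root (p_m m) (val r1).
  by rewrite rootE pG_C pG_val val_eq0 -rootE.
have [rho' [hrho' hr1rho']] := @max_real_root _ _ pnz (algRvalP r1) r1C.
exists rho; split; last first.
- exists rho' => //; apply: lt_le_trans hr1rho'; by rewrite -rval -ltv.
- by [].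
have r3 : 3 < r by lra.
have h3r : (3%:R : algR) < r by lra.
have h3C : 3%:R < rho by move: h3r; rewrite ltv vN rval.
have h1 : 0 < rho by apply: lt_trans h3C; rewrite ltr0n.
have h2 : 0 < rho - 3 by rewrite subr_gt0.
have h3 : 0 < rho - 1 by rewrite subr_gt0; apply: lt_trans h3C; rewrite ltr1n.
have h4 : 0 < rho ^+ 2 - rho - 2.
  have -> : rho ^+ 2 - rho - 2 = (rho - 2) * (rho + 1) by ring.
  apply: mulr_gt0; last by apply: addr_gt0.
  by rewrite subr_gt0; apply: lt_trans h3C; rewrite ltr_nat.
pose v := \row_(i < m - 6) vf rho i.
have hv : forall i, 0 < v 0 i.
  move=> i; rewrite mxE /vf.
  case: ifP => _; first by repeat apply: mulr_gt0.
  case: ifP => _; first by repeat apply: mulr_gt0.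
  case: ifP => _; first by repeat apply: mulr_gt0.
  case: ifP => _; by repeat apply: mulr_gt0.
have hA : forall i j, 0 <= adjmx (G_same m) i j by move=> i j; rewrite mxE ler0n.
have hvA : v *m adjmx (G_same m) = rho *: v.
  apply: eigvec => //; by move: rhoroot; rewrite rootE fG_C => /eqP.
split.
  exists rho; last by rewrite ger0_norm // ltW.
  apply/eigenvalueP; exists v => //.
  have i0lt : (0 < m - 6)%N by move: hm; clear; lia.
  apply/eqP => v0'; have := hv (Ordinal i0lt); by rewrite v0' mxE ltxx.
exact: perron hA hv hvA.
Qed.
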